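(* Let $\mathcal X,\mathcal Y$ be nonempty convex compact sets and $\mathcal L:\mathcal X\times\mathcal Y\to\mathbb R$ a differentiable $(\mu_{\mathcal X},\mu_{\mathcal Y})$-uniformly strongly convex-concave function with saddle point $(x^*,y^* )$. Then for every $z\in\mathcal X\times\mathcal Y$, $$h(z)\le P_{\mathcal L}\sqrt{2w(z)},\qquad\text{and}\qquad P_{\mathcal L}\le\sqrt2\sup_{z\in\mathcal X\times\mathcal Y}\max\left\{\frac{\|\nabla_x\mathcal L(z)\|_{\mathcal X^*}}{\sqrt{\mu_{\mathcal X}}},\frac{\|\nabla_y\mathcal L(z)\|_{\mathcal Y^*}}{\sqrt{\mu_{\mathcal Y}}}\right\}.$$
   Context: Norms $\|\cdot\|_{\mathcal X},\|\cdot\|_{\mathcal Y}$ with dual norms $\|\cdot\|_{\mathcal X^*},\|\cdot\|_{\mathcal Y^*}$. $(\mu_{\mathcal X},\mu_{\mathcal Y})$-uniformly strongly convex-concave ($\mu_{\mathcal X},\mu_{\mathcal Y}>0$): $\mathcal L(\cdot,y)$ is $\mu_{\mathcal X}$-strongly convex w.r.t. $\|\cdot\|_{\mathcal X}$ for every $y$ and $-\mathcal L(x,\cdot)$ is $\mu_{\mathcal Y}$-strongly convex w.r.t. $\|\cdot\|_{\mathcal Y}$ for every $x$. Saddle point: $\mathcal L(x^*,y)\le\mathcal L(x^*,y^* )\le\mathcal L(x,y^* )$ for all $x,y$; $\mathcal L^*:=\mathcal L(x^*,y^* )$. For $z=(x,y)$: $h(z):=\max_{y'}\mathcal L(x,y')-\min_{x'}\mathcal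 L(x',y)$, $w(z):=\mathcal L(x,y^* )-\mathcal L(x^*,y)$. With $\hat y(x):=\arg\max_{y}\mathcal L(x,y)$ and $\hat x(y):=\arg\min_x\mathcal L(x,y)$: $P_{\mathcal X}:=\sup_{x\ne x^*}\frac{\langle\nabla_x\mathcal L(x,\hat y(x)),x-x^*\rangle}{\sqrt{\mathcal L(x,y^* )-\mathcal L^*}}$, $P_{\mathcal Y}:=\sup_{y\ne y^*}\frac{\langle\nabla_y\mathcal L(\hat x(y),y),y^*-y\rangle}{\sqrt{\mathcal L^*-\mathcal L(x^*,y)}}$, $P_{\mathcal L}:=\max\{P_{\mathcal X},P_{\mathcal Y}\}$. *)

(* Defs.v *)
From HB Require Import structures.
From mathcomp Require Import all_boot all_order all_algebra.
From mathcomp Require Import all_classical all_reals all_analysis.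
Set Implicit Arguments. Unset Strict Implicit. Unset Printing Implicit Defensive.
Import Order.TTheory GRing.Theory Num.Theory.
Import numFieldNormedType.Exports.
Local Open Scope classical_set_scope.
Local Open Scope ring_scope.

Section Defs.
Variable R : realType.

Definition is_norm (n : nat) (N : 'rV[R]_n -> R) : Prop :=
  [/\ forall x, 0 <= N x,
      forall x, N x = 0 -> x = 0,
      forall (a : R) x, N (a *: x) = `|a| * N x
    & forall x y, N (x + y) <= N x + N y].

Definition dual_norm (n : nat) (N : 'rV[R]_n -> R) (g : 'rV[R]_n -> R) : R :=
  sup [set g u | u in [set u | N u <= 1]].

Definition convex_set_rV (n : nat) (X : set 'rV[R]_n) : Prop :=
  forall a b (t : R), X a -> X b -> 0 <= t <= 1 -> X (t *: a + (1 - t) *: b).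

Definition strongly_convex_on (n : nat) (N : 'rV[R]_n -> R) (mu : R)
  (X : set 'rV[R]_n) (f : 'rV[R]_n -> R) : Prop :=
  forall a b (t : R), X a -> X b -> 0 <= t <= 1 ->
    f (t *: a + (1 - t) *: b)
      <= t * f a + (1 - t) * f b - mu / 2 * t * (1 - t) * N (a - b) ^+ 2.

Definition Lpair (n m : nat) (L : 'rV[R]_n -> 'rV[R]_m -> R)
  (z : 'rV[R]_n * 'rV[R]_m) : R := L z.1 z.2.

(* Partial gradients, given as the linear functionals u |-> <grad, u>. *)
Definition grad_x (n m : nat) (L : 'rV[R]_n -> 'rV[R]_m -> R) x y
  : 'rV[R]_n -> R := fun u => 'd (Lpair L) (x, y) (u, 0).
Definition grad_y (n m : nat) (L : 'rV[R]_n -> 'rV[R]_m -> R) x y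
  : 'rV[R]_m -> R := fun v => 'd (Lpair L) (x, y) (0, v).

Definition yhat (n m : nat) (L : 'rV[R]_n -> 'rV[R]_m -> R)
  (Y : set 'rV[R]_m) x : 'rV[R]_m :=
  xget 0 [set y | Y y /\ forall y', Y y' -> L x y' <= L x y].
Definition xhat (n m : nat) (L : 'rV[R]_n -> 'rV[R]_m -> R)
  (X : set 'rV[R]_n) y : 'rV[R]_n :=
  xget 0 [set x | X x /\ forall x', X x' -> L x y <= L x' y].

Definition gap (n m : nat) (L : 'rV[R]_n -> 'rV[R]_m -> R)
  (X : set 'rV[R]_n) (Y : set 'rV[R]_m) (z : 'rV[R]_n * 'rV[R]_m) : R :=
  sup [set L z.1 y' | y' in Y] - inf [set L x' z.2 | x' in X].

Definition wgap (n m : nat) (L : 'rV[R]_n -> 'rV[R]_m -> R) xs ys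
  (z : 'rV[R]_n * 'rV[R]_m) : R := L z.1 ys - L xs z.2.

Local Open Scope ereal_scope.

Definition P_X (n m : nat) (L : 'rV[R]_n -> 'rV[R]_m -> R)
  (X : set 'rV[R]_n) (Y : set 'rV[R]_m) xs ys : \bar R :=
  ereal_sup [set ((grad_x L x (yhat L Y x) (x - xs)
                  / Num.sqrt (L x ys - L xs ys))%R)%:E
            | x in [set x | X x /\ x <> xs]].

Definition P_Y (n m : nat) (L : 'rV[R]_n -> 'rV[R]_m -> R)
  (X : set 'rV[R]_n) (Y : set 'rV[R]_m) xs ys : \bar R :=
  ereal_sup [set ((grad_y L (xhat L X y) y (ys - y)
                  / Num.sqrt (L xs ys - L xs y))%R)%:E
            | y in [set y | Y y /\ y <> ys]].

Definition P_L (n m : nat) (L : 'rV[R]_n -> 'rV[R]_m -> R)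
  (X : set 'rV[R]_n) (Y : set 'rV[R]_m) xs ys : \bar R :=
  maxe (P_X L X Y xs ys) (P_Y L X Y xs ys).

End Defs.

(* Main.v *)
Require Import Defs.
From HB Require Import structures.
From mathcomp Require Import all_boot all_order all_algebra.
From mathcomp Require Import all_classical all_reals all_analysis.
From mathcomp Require Import lra ring.
Import Order.TTheory GRing.Theory Num.Theory.
Import numFieldNormedType.Exports.
Local Open Scope classical_set_scope.
Local Open Scope ring_scope.

Set Implicit Arguments. Unset Strict Implicit.
Section H.
Variable R : realType.

Lemma right_sub : (0:R)^'+ `=>` (0:R)^'.
Proof.
move=> A; rewrite /dnbhs /within /= => H; apply: filterS H => y H y0; apply: H; exact: lt0r_neq0.
Qed.

Lemma near_right01 : \forall h \near (0:R)^'+, 0 < h <= 1.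
Proof.
rewrite /within /=; apply/nbhs_ballP; exists 1 => //= h.
rewrite /ball /= sub0r normrN => /ltr_normlW h1 h0.
by rewrite h0 ltW.
Qed.

Lemma dir_le (V : normedModType R) (f : V -> R) a v c :
  differentiable f a ->
  (forall h, 0 < h <= 1 -> f (h *: v + a) - f a <= h * c) -> 'd f a v <= c.
Proof.
move=> df H.
have dv := @diff_derivable _ _ _ f a v df.
rewrite -deriveE //.
set q := fun h : R => h^-1 *: ((f \o shift a) (h *: v) - f a).
have hq : q @ 0^' --> 'D_v f a by exact: dv.
have hq' : q @ (0:R)^'+ --> 'D_v f a.
  apply: cvg_trans hq; move=> A; exact: right_sub.
rewrite -(cvg_lim _ hq') //.
apply: limr_le; first by apply/cvg_ex; eexists; exact: hq'.
apply: filterS near_right01 => h /andP[h0 h1].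
rewrite /q /= -[c](mulKf (lt0r_neq0 h0)) ler_pM2l ?invr_gt0 //.
by apply: H; rewrite h0.
Qed.

Lemma dir_ge (V : normedModType R) (f : V -> R) a v c :
  differentiable f a ->
  (forall h, 0 < h <= 1 -> h * c <= f (h *: v + a) - f a) -> c <= 'd f a v.
Proof.
move=> df H.
have dv := @diff_derivable _ _ _ f a v df.
rewrite -deriveE //.
set q := fun h : R => h^-1 *: ((f \o shift a) (h *: v) - f a).
have hq : q @ 0^' --> 'D_v f a by exact: dv.
have hq' : q @ (0:R)^'+ --> 'D_v f a.
  apply: cvg_trans hq; move=> A; exact: right_sub.
rewrite -(cvg_lim _ hq') //.
apply: limr_ge; first by apply/cvg_ex; eexists; exact: hq'.
apply: filterS near_right01 => h /andP[h0 h1].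
rewrite /q /= -[c](mulKf (lt0r_neq0 h0)) ler_pM2l ?invr_gt0 //.
by apply: H; rewrite h0.
Qed.

Lemma pairZ n m (h : R) (u : 'rV[R]_n) (w : 'rV[R]_m) : h *: (u, w) = (h *: u, h *: w).
Proof. by []. Qed.
Lemma coord_le n (u : 'rV[R]_n) i : `|u ord0 i| <= `|u|.
Proof.
have /mapP[j Hj ->] : `|u ord0 i| \in [seq `|u x.1 x.2| | x : 'I_1 * 'I_n].
  by apply/mapP; exists (ord0, i) => //=; rewrite mem_enum.
by rewrite [leRHS]/Num.Def.normr /= mx_normrE; apply/bigmax_geP; right => /=; exists j.
Qed.

Lemma lin_bound n (phi psi : 'rV[R]_n -> R) :
  (forall x y, phi (x + y) <= phi x + phi y) -> phi 0 <= 0 ->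
  (forall a x, phi (a *: x) <= `|a| * psi x) -> (forall x, 0 <= psi x) ->
  forall u, phi u <= (\sum_(i < n) psi (delta_mx ord0 i)) * `|u|.
Proof.
move=> sub p0 hom pos u.
rewrite {1}(row_sum_delta u).
apply: (@le_trans _ _ (\sum_(i < n) `|u ord0 i| * psi (delta_mx ord0 i))).
  elim/big_rec2: _ => // i y1 y2 _ H.
  apply: le_trans (sub _ _) _; apply: lerD => //.
rewrite mulr_suml; apply: ler_sum => i _.
by rewrite mulrC ler_wpM2l // coord_le.
Qed.

Lemma norm_upper n (N : 'rV[R]_n -> R) : is_norm N ->
  exists K, 0 <= K /\ forall u, N u <= K * `|u|.
Proof.
case=> N0 Nd NZ Nt.
exists (\sum_(i < n) N (delta_mx ord0 i)); split.
  by apply: sumr_ge0 => i _.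
apply: lin_bound => //.
- by have := NZ 0 0; rewrite scale0r normr0 mul0r => ->.
- by move=> a x; rewrite NZ.
Qed.

Lemma norm_cont n (N : 'rV[R]_n -> R) : is_norm N -> continuous N.
Proof.
move=> hN; have [K [K0 HK]] := @norm_upper n N hN.
case: hN => N0 Nd NZ Nt.
have NN x : N (- x) = N x by rewrite -scaleN1r NZ normrN normr1 mul1r.
move=> u; apply/(@cvgrPdist_le _ _ _ (nbhs u) (nbhs_filter u)) => e e0.
have Kp : 0 < K + 1 by rewrite ltr_wpDl.
near=> t.
have h1 : N t <= N u + N (t - u).
  by apply: le_trans (Nt _ _); rewrite addrC subrK.
have h2 : N u <= N t + N (u - t).
  by apply: le_trans (Nt _ _); rewrite addrC subrK.
have h3 : N (u - t) <= e.
  apply: le_trans (HK _) _.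
  have hd : `|u - t| <= e / (K + 1).
    near: t; have [+ _] := @cvgrPdist_le _ _ _ (nbhs u) (nbhs_filter u) id u.
    by move=> /(_ cvg_id (e / (K + 1))); apply; rewrite divr_gt0.
  apply: (@le_trans _ _ ((K + 1) * `|u - t|)).
    by rewrite ler_wpM2r // lerDl.
  by rewrite -ler_pdivlMl // mulrC.
have h4 : N (t - u) <= e by rewrite -opprB NN.
rewrite ler_norml; apply/andP; split.
all: lra.
Unshelve. all: by end_near. Qed.

Lemma norm_lower n (N : 'rV[R]_n -> R) : is_norm N ->
  exists c, 0 < c /\ forall u, `|u| <= c * N u.
Proof.
move=> hN; have Nc := @norm_cont n N hN.
case: hN => N0 Nd NZ Nt.
pose S := [set u : 'rV[R]_n | `|u| = 1].
have Sc : compact S.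
  apply: bounded_closed_compact.
    exists 1; split; first by rewrite num_real.
    by move=> M M1 u /= ->; rewrite ltW.
  apply: (@preimage_closed _ R (fun u : 'rV[R]_n => `|u|) [set (1:R)]).
    by move=> x _; apply: norm_continuous.
  exact: closed_eq.
pose f := fun u => (N u)^-1.
have fc : {within S, continuous f}.
  apply: continuous_in_subspaceT => u; rewrite inE /S /= => u1.
  apply: continuousV; last exact: Nc.
  apply/eqP => /Nd u0; move: u1; rewrite u0 normr0 => /eqP; rewrite eq_sym oner_eq0.
  by [].
have [M [Mreal HM]] := compact_bounded (continuous_compact fc Sc).
pose c := Num.max (M + 1) 1.
have c0 : 0 < c by rewrite lt_max ltr01 orbT.
exists c; split => // u.
have [->|u0] := eqVneq u 0; first by rewrite normr0 mulr_ge0 // ltW.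
have nu0 : 0 < `|u| by rewrite normr_gt0.
pose v := `|u|^-1 *: u.
have Sv : S v by rewrite /S /= normrZ normfV normr_id mulVf // lt0r_neq0.
have Nu : N u = `|u| * N v.
  by rewrite NZ normfV normr_id mulrA mulfV ?lt0r_neq0 // mul1r.
have Nv0 : 0 < N v.
  rewrite lt_neqAle N0 andbT eq_sym; apply/eqP => /Nd v0.
  by move: Sv; rewrite /S /= v0 normr0 => /eqP; rewrite eq_sym oner_eq0.
have hf : `|f v| <= c.
  apply: (HM c); first by rewrite lt_max ltrDl ltr01.
  by exists v.
have hv : (N v)^-1 <= c.
  by move: hf; rewrite /f ger0_norm // invr_ge0 ltW.
rewrite Nu mulrA mulrC -ler_pdivrMr; last by rewrite mulr_gt0.
rewrite invfM mulrA mulrAC mulfV ?lt0r_neq0 // mul1r.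
by rewrite -[N v]invrK lef_pV2 ?posrE ?invr_gt0.
Qed.

Lemma dual_le n (N : 'rV[R]_n -> R) (g : 'rV[R]_n -> R) : is_norm N ->
  (forall a u v, g (a *: u + v) = a * g u + g v) ->
  0 <= dual_norm N g /\ forall u, g u <= dual_norm N g * N u.
Proof.
move=> hN gl.
have [c [c0 Hc]] := @norm_lower n N hN.
case: hN => N0 Nd NZ Nt.
have g0 : g 0 = 0.
  by have := gl 1 0 0; rewrite scale1r addr0 mul1r => h; lra.
have gA x y : g (x + y) = g x + g y by have := gl 1 x y; rewrite scale1r mul1r.
have gZ a x : g (a *: x) = a * g x by have := gl a x 0; rewrite addr0 g0 addr0.
set Kg := \sum_(i < n) `|g (delta_mx ord0 i)|.
have Kg0 : 0 <= Kg by apply: sumr_ge0.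
have gb : forall u, g u <= Kg * `|u|.
  apply: (@lin_bound n g (fun x => `|g x|)).
  - by move=> x y; rewrite gA.
  - by rewrite g0.
  - by move=> a x; rewrite gZ -normrM ler_norm.
  - by [].
pose A := [set g u | u in [set u | N u <= 1]].
have Aub : has_ubound A.
  exists (Kg * c) => _ [u /= Nu1 <-].
  apply: le_trans (gb u) _; rewrite ler_wpM2l //.
  by apply: le_trans (Hc u) _; rewrite ler_piMr // ltW.
have supA : forall u, N u <= 1 -> g u <= dual_norm N g.
  by move=> u Nu; apply: ub_le_sup => //; exists u.
have d0 : 0 <= dual_norm N g.
  rewrite -g0; apply: supA; have := NZ 0 0; rewrite scale0r normr0 mul0r => ->; exact: ler01.
split => // u.
have [->|u0] := eqVneq u 0.
  by rewrite g0 mulr_ge0 // N0.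
have Nu0 : 0 < N u.
  rewrite lt_neqAle N0 andbT eq_sym; apply/eqP => /Nd; exact/eqP.
have : g ((N u)^-1 *: u) <= dual_norm N g.
  by apply: supA; rewrite NZ ger0_norm ?invr_ge0 ?N0 // mulVf // lt0r_neq0.
rewrite gZ -ler_pdivlMl ?invr_gt0 // invrK mulrC => H.
exact: H.
Qed.

Lemma limit_t (Q D : R) : 0 <= D ->
  (forall t, 0 < t <= 1 -> t * (1 - t) * Q <= t * D) -> Q <= D.
Proof.
move=> D0 H; rewrite leNgt; apply/negP => DQ.
have Q0 : 0 < Q by apply: le_lt_trans DQ.
pose t := (Q - D) / (2 * Q).
have t0 : 0 < t by rewrite divr_gt0 ?subr_gt0 // mulr_gt0.
have t1 : t <= 1.
  by rewrite ler_pdivrMr ?mulr_gt0 //; lra.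
have := H t; rewrite t0 t1 => /(_ isT).
rewrite -mulrA ler_pM2l // => h.
have : (1 - t) * Q = (Q + D) / 2.
  rewrite /t; field; apply/eqP; lra.
lra.
Qed.

Lemma sc_lower n (N : 'rV[R]_n -> R) mu (X : set 'rV[R]_n) f xs x :
  convex_set_rV X -> strongly_convex_on N mu X f -> X xs -> X x ->
  (forall x', X x' -> f xs <= f x') -> mu / 2 * N (x - xs) ^+ 2 <= f x - f xs.
Proof.
move=> cX sc Xs Xx mn.
apply: limit_t; first by rewrite subr_ge0 mn.
move=> t /andP[t0 t1].
have tt : 0 <= t <= 1 by rewrite ltW.
have := sc x xs t Xx Xs tt.
have := mn _ (cX x xs t Xx Xs tt).
lra.
Qed.

Lemma compact_argmax (T : topologicalType) (A : set T) (phi : T -> R) :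
  compact A -> A !=set0 -> (forall y, A y -> {for y, continuous phi}) ->
  exists y, A y /\ forall y', A y' -> phi y' <= phi y.
Proof.
move=> cA [a Aa] hc.
have cI : compact (phi @` A).
  apply: continuous_compact => //; apply: continuous_in_subspaceT => y.
  by rewrite inE => /hc.
have [M [Mreal HM]] := compact_bounded cI.
have ub : has_ubound (phi @` A).
  exists (M + 1) => _ [y Ay <-].
  have := HM (M + 1); rewrite ltrDl ltr01 => /(_ isT (phi y)).
  by move=> /(_ (ex_intro2 _ _ y Ay erefl)) /(le_trans (ler_norm _)).
have ne : (phi @` A) !=set0 by exists (phi a), a.
have := closure_sup ne ub.
rewrite -(closure_id _).1; last exact: compact_closed.
case=> y Ay hy; exists y; split => // y' Ay'.
by rewrite hy; apply: ub_le_sup => //; exists y'.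
Qed.

Lemma cont_L2 n m (L : 'rV[R]_n -> 'rV[R]_m -> R) x y :
  differentiable (Lpair L) (x, y) -> {for y, continuous (fun y => L x y)}.
Proof.
move=> d.
have := differentiable_continuous d.
move=> c.
apply: (@cvg_comp _ _ _ (fun y => (x, y)) (Lpair L) _ (nbhs (x, y))) c.
exact: (@cvg_pair _ _ _ (nbhs y) (nbhs x) (nbhs y) _ _ _ (fun=> x) id (cvg_cst x) cvg_id).
Qed.

Lemma cont_L1 n m (L : 'rV[R]_n -> 'rV[R]_m -> R) x y :
  differentiable (Lpair L) (x, y) -> {for x, continuous (fun x => L x y)}.
Proof.
move=> d.
have := differentiable_continuous d.
move=> c.
apply: (@cvg_comp _ _ _ (fun x => (x, y)) (Lpair L) _ (nbhs (x, y))) c.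
exact: (@cvg_pair _ _ _ (nbhs x) (nbhs x) (nbhs y) _ _ _ id (fun=> y) cvg_id (cvg_cst y)).
Qed.

Lemma vec_id n (h : R) (a b : 'rV[R]_n) : h *: (a - b) + b = h *: a + (1 - h) *: b.
Proof. by rewrite scalerBr scalerBl scale1r addrA addrAC. Qed.

Lemma grad_x_lin n m (L : 'rV[R]_n -> 'rV[R]_m -> R) x y a u v :
  grad_x L x y (a *: u + v) = a * grad_x L x y u + grad_x L x y v.
Proof.
rewrite /grad_x.
have -> : ((a *: u + v, 0) : 'rV[R]_n * 'rV[R]_m) = a *: (u, 0) + (v, 0).
  transitivity (a *: u + v, a *: (0 : 'rV[R]_m) + 0); last by [].
  by rewrite scaler0 addr0.
by rewrite linearP.
Qed.

Lemma grad_y_lin n m (L : 'rV[R]_n -> 'rV[R]_m -> R) x y a u v :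
  grad_y L x y (a *: u + v) = a * grad_y L x y u + grad_y L x y v.
Proof.
rewrite /grad_y.
have -> : ((0, a *: u + v) : 'rV[R]_n * 'rV[R]_m) = a *: (0, u) + (0, v).
  transitivity ((a *: (0 : 'rV[R]_n) + 0, a *: u + v)); last by [].
  by rewrite scaler0 addr0.
by rewrite linearP.
Qed.

Lemma grad_x_ineq n m (N : 'rV[R]_n -> R) mu (X : set 'rV[R]_n)
  (L : 'rV[R]_n -> 'rV[R]_m -> R) x y x' :
  convex_set_rV X -> strongly_convex_on N mu X (fun x => L x y) -> 0 <= mu ->
  differentiable (Lpair L) (x, y) -> X x -> X x' ->
  L x y - L x' y <= grad_x L x y (x - x').
Proof.
move=> cX sc mu0 d Xx Xx'.
have H : 'd (Lpair L) (x, y) (x' - x, 0) <= L x' y - L x y.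
  apply: dir_le => // h /andP[h0 h1].
  have -> : h *: ((x' - x, 0) : 'rV[R]_n * 'rV[R]_m) + (x, y) =
            (h *: x' + (1 - h) *: x, y).
    transitivity ((h *: (x' - x) + x, h *: (0 : 'rV[R]_m) + y)); first by [].
    by rewrite scaler0 add0r vec_id.
  have := sc x' x h Xx' Xx; rewrite ltW //= => /(_ h1).
  rewrite /Lpair /= => H.
  have : 0 <= mu / 2 * h * (1 - h) * N (x' - x) ^+ 2.
    apply: mulr_ge0; last exact: sqr_ge0.
    apply: mulr_ge0; last by rewrite subr_ge0.
    by apply: mulr_ge0; [exact: divr_ge0 | exact: ltW].
  lra.
have -> : grad_x L x y (x - x') = - 'd (Lpair L) (x, y) (x' - x, 0).
  rewrite /grad_x -linearN /=; congr ('d _ _ _).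
  transitivity (- (x' - x), - (0 : 'rV[R]_m)); last by [].
  by rewrite opprB oppr0.
lra.
Qed.

Lemma grad_y_ineq n m (N : 'rV[R]_m -> R) mu (Y : set 'rV[R]_m)
  (L : 'rV[R]_n -> 'rV[R]_m -> R) x y y' :
  convex_set_rV Y -> strongly_convex_on N mu Y (fun y => - L x y) -> 0 <= mu ->
  differentiable (Lpair L) (x, y) -> Y y -> Y y' ->
  L x y' - L x y <= grad_y L x y (y' - y).
Proof.
move=> cY sc mu0 d Yy Yy'.
apply: dir_ge => // h /andP[h0 h1].
have -> : h *: ((0, y' - y) : 'rV[R]_n * 'rV[R]_m) + (x, y) =
          (x, h *: y' + (1 - h) *: y).
  transitivity ((h *: (0 : 'rV[R]_n) + x, h *: (y' - y) + y)); first by [].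
  by rewrite scaler0 add0r vec_id.
have := sc y' y h Yy' Yy; rewrite ltW //= => /(_ h1).
rewrite /Lpair /= => H.
have : 0 <= mu / 2 * h * (1 - h) * N (y' - y) ^+ 2.
  apply: mulr_ge0; last exact: sqr_ge0.
    apply: mulr_ge0; last by rewrite subr_ge0.
    by apply: mulr_ge0; [exact: divr_ge0 | exact: ltW].
lra.
Qed.

Lemma sqrt_sum (a b : R) : 0 <= a -> 0 <= b ->
  Num.sqrt a + Num.sqrt b <= Num.sqrt (2 * (a + b)).
Proof.
move=> a0 b0.
have s0 : 0 <= Num.sqrt a + Num.sqrt b by rewrite addr_ge0 ?sqrtr_ge0.
rewrite -(ger0_norm s0) -sqrtr_sqr ler_sqrt; last by rewrite mulr_ge0 ?addr_ge0.
have ha := sqr_sqrtr a0; have hb := sqr_sqrtr b0.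
have := sqr_ge0 (Num.sqrt a - Num.sqrt b).
nra.
Qed.

Lemma ratio_bound (g d Nv a mu : R) : 0 < mu -> 0 <= d -> 0 < Nv ->
  g <= d * Nv -> mu / 2 * Nv ^+ 2 <= a ->
  g / Num.sqrt a <= Num.sqrt 2 * (d / Num.sqrt mu).
Proof.
move=> mu0 d0 Nv0 gd ha.
have a0 : 0 < a.
  apply: lt_le_trans ha; rewrite mulr_gt0 ?divr_gt0 // exprn_gt0 //.
have smu : 0 < Num.sqrt mu by rewrite sqrtr_gt0.
have k : Num.sqrt mu * Nv <= Num.sqrt 2 * Num.sqrt a.
  rewrite -[Nv](ger0_norm (ltW Nv0)) -sqrtr_sqr.
  rewrite -sqrtrM; last exact: ltW.
  rewrite -sqrtrM; last by [].
  rewrite ler_sqrt; last by rewrite mulr_ge0 // ltW.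
  lra.
rewrite ler_pdivrMr ?sqrtr_gt0 //.
apply: le_trans gd _.
have -> : Num.sqrt 2 * (d / Num.sqrt mu) * Num.sqrt a =
  d * ((Num.sqrt 2 * Num.sqrt a) / Num.sqrt mu).
  by ring.
rewrite ler_wpM2l // ler_pdivlMr //.
by rewrite mulrC.
Qed.
End H.
Unset Implicit Arguments.

Theorem proposition15 (R : realType) (n m : nat)
  (NX : 'rV[R]_n -> R) (NY : 'rV[R]_m -> R)
  (X : set 'rV[R]_n) (Y : set 'rV[R]_m)
  (L : 'rV[R]_n -> 'rV[R]_m -> R) (muX muY : R) (xs : 'rV[R]_n) (ys : 'rV[R]_m) :
  is_norm NX -> is_norm NY ->
  X !=set0 -> Y !=set0 -> convex_set_rV X -> convex_set_rV Y ->
  compact X -> compact Y ->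
  (forall x y, X x -> Y y -> differentiable (Lpair L) (x, y)) ->
  0 < muX -> 0 < muY ->
  (forall y, Y y -> strongly_convex_on NX muX X (fun x => L x y)) ->
  (forall x, X x -> strongly_convex_on NY muY Y (fun y => - L x y)) ->
  X xs -> Y ys ->
  (forall x y, X x -> Y y -> L xs y <= L xs ys /\ L xs ys <= L x ys) ->
  (forall z : 'rV[R]_n * 'rV[R]_m, X z.1 -> Y z.2 ->
     ((gap L X Y z)%:E <= P_L L X Y xs ys * (Num.sqrt (2 * wgap L xs ys z))%:E)%E)
  /\
  (P_L L X Y xs ys <=
     (Num.sqrt 2)%:E *
     ereal_sup [set (Num.max (dual_norm NX (grad_x L z.1 z.2) / Num.sqrt muX)
                             (dual_norm NY (grad_y L z.1 z.2) / Num.sqrt muY))%:E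
               | z in [set z : 'rV[R]_n * 'rV[R]_m | X z.1 /\ Y z.2]])%E.
Proof.
move=> hNX hNY neX neY cX cY kX kY dL muX0 muY0 scX scY Xs Ys sad.
have yhP : forall x, X x -> Y (yhat L Y x) /\
    (forall y', Y y' -> L x y' <= L x (yhat L Y x)).
  move=> x Xx.
  pose P := [set y | Y y /\ forall y', Y y' -> L x y' <= L x y].
  have : P (xget 0 P).
    apply: xgetPex; apply: compact_argmax => // y Yy.
    exact: cont_L2 (dL _ _ Xx Yy).
  by [].
have xhP : forall y, Y y -> X (xhat L X y) /\
    (forall x', X x' -> L (xhat L X y) y <= L x' y).
  move=> y Yy.
  pose P := [set x | X x /\ forall x', X x' -> L x y <= L x' y].
  have : P (xget 0 P).
    apply: xgetPex.
    have [x [Xx H]] : exists x, X x /\ forall x', X x' -> - L x' y <= - L x y.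
      apply: compact_argmax => // x Xx.
      exact: (cvgN (cont_L1 (dL _ _ Xx Yy))).
    by exists x; split => // x' Xx'; rewrite -lerN2; apply: H.
  by [].
have muX0' : 0 <= muX := ltW muX0.
have muY0' : 0 <= muY := ltW muY0.
have NXpos : forall u, u != 0 -> 0 < NX u.
  move=> u u0; case: hNX => N0 Nd _ _; rewrite lt_neqAle N0 andbT eq_sym.
  by apply/eqP => /Nd /eqP; apply/negP.
have NYpos : forall u, u != 0 -> 0 < NY u.
  move=> u u0; case: hNY => N0 Nd _ _; rewrite lt_neqAle N0 andbT eq_sym.
  by apply/eqP => /Nd /eqP; apply/negP.
have NYN : forall u, NY (- u) = NY u.
  by case: hNY => _ _ NZ _ u; rewrite -scaleN1r NZ normrN normr1 mul1r.
have lowX : forall x, X x -> muX / 2 * NX (x - xs) ^+ 2 <= L x ys - L xs ys.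
  move=> x Xx; have H : forall x', X x' -> L xs ys <= L x' ys.
    by move=> x' Xx'; exact: (sad x' ys Xx' Ys).2.
  exact: (sc_lower cX (scX ys Ys) Xs Xx H).
have lowY : forall y, Y y -> muY / 2 * NY (y - ys) ^+ 2 <= L xs ys - L xs y.
  move=> y Yy; have := (sc_lower cY (scY xs Xs) Ys Yy).
  have H : forall y', Y y' -> - L xs ys <= - L xs y'.
    by move=> y' Yy'; rewrite lerN2; exact: (sad xs y' Xs Yy').1.
  move=> /(_ H); lra.
have rX : forall x, X x -> x != xs ->
    let g := grad_x L x (yhat L Y x) (x - xs) in
    let a := L x ys - L xs ys in
    0 < a /\ a <= g /\ ((g / Num.sqrt a)%:E <= P_X L X Y xs ys)%E.
  move=> x Xx xn g a.
  have [Yyh yhmax] := yhP x Xx.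
  have a0 : 0 < a.
    apply: lt_le_trans (lowX x Xx).
    by rewrite mulr_gt0 ?divr_gt0 // exprn_gt0 // NXpos // subr_eq0.
  split => //; split.
    have := grad_x_ineq cX (scX _ Yyh) muX0' (dL _ _ Xx Yyh) Xx Xs.
    have := yhmax ys Ys; have := (sad xs _ Xs Yyh).1.
    rewrite /g /a; lra.
  apply: ereal_sup_ubound; exists x => //; split => //; exact/eqP.
have rY : forall y, Y y -> y != ys ->
    let g := grad_y L (xhat L X y) y (ys - y) in
    let b := L xs ys - L xs y in
    0 < b /\ b <= g /\ ((g / Num.sqrt b)%:E <= P_Y L X Y xs ys)%E.
  move=> y Yy yn g b.
  have [Xxh xhmin] := xhP y Yy.
  have b0 : 0 < b.
    apply: lt_le_trans (lowY y Yy).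
    by rewrite mulr_gt0 ?divr_gt0 // exprn_gt0 // NYpos // subr_eq0.
  split => //; split.
    have := grad_y_ineq cY (scY _ Xxh) muY0' (dL _ _ Xxh Yy) Yy Ys.
    have := xhmin xs Xs; have := (sad _ ys Xxh Ys).2.
    rewrite /g /b; lra.
  apply: ereal_sup_ubound; exists y => //; split => //; exact/eqP.
have PXle : (P_X L X Y xs ys <= P_L L X Y xs ys)%E by rewrite /P_L le_max lexx.
have PYle : (P_Y L X Y xs ys <= P_L L X Y xs ys)%E
  by rewrite /P_L le_max lexx orbT.
split.
  case=> x y /= Xx Yy.
  rewrite /gap /wgap /=.
  have [Yyh yhmax] := yhP x Xx.
  have [Xxh xhmin] := xhP y Yy.
  have supE : sup [set L x y' | y' in Y] = L x (yhat L Y x).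
    apply/eqP; rewrite eq_le; apply/andP; split.
      apply: ge_sup; first by exists (L x (yhat L Y x)), (yhat L Y x).
      by move=> _ [y' Yy' <-]; apply: yhmax.
    apply: ub_le_sup; last by exists (yhat L Y x).
    by exists (L x (yhat L Y x)) => _ [y' Yy' <-]; apply: yhmax.
  have infE : inf [set L x' y | x' in X] = L (xhat L X y) y.
    apply/eqP; rewrite eq_le; apply/andP; split.
      apply: ge_inf; last by exists (xhat L X y).
      by exists (L (xhat L X y) y) => _ [x' Xx' <-]; apply: xhmin.
    apply: lb_le_inf; first by exists (L (xhat L X y) y), (xhat L X y).
    by move=> _ [x' Xx' <-]; apply: xhmin.
  rewrite supE infE.
  set yh := yhat L Y x; set xh := xhat L X y.
  set Ls := L xs ys.
  have a0 : 0 <= L x ys - Ls by rewrite subr_ge0; exact: (sad x ys Xx Ys).2.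
  have b0 : 0 <= Ls - L xs y by rewrite subr_ge0; exact: (sad xs y Xs Yy).1.
  have gA : L x yh - Ls <= grad_x L x yh (x - xs).
    have := grad_x_ineq cX (scX _ Yyh) muX0' (dL _ _ Xx Yyh) Xx Xs.
    have := (sad xs _ Xs Yyh).1; rewrite /Ls; lra.
  have gB : Ls - L xh y <= grad_y L xh y (ys - y).
    have := grad_y_ineq cY (scY _ Xxh) muY0' (dL _ _ Xxh Yy) Yy Ys.
    have := (sad _ ys Xxh Ys).2; rewrite /Ls; lra.
  have Axs : x = xs -> L x yh - Ls <= 0 /\ L x ys - Ls = 0.
    move=> ex; rewrite /Ls ex subrr; split => //.
    rewrite subr_le0; exact: (sad xs _ Xs Yyh).1.
  have Bys : y = ys -> Ls - L xh y <= 0 /\ Ls - L xs y = 0.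
    move=> ey; rewrite /Ls ey subrr; split => //.
    rewrite subr_le0; exact: (sad _ ys Xxh Ys).2.
  have cA : forall p, (P_X L X Y xs ys <= p%:E)%E ->
      L x yh - Ls <= p * Num.sqrt (L x ys - Ls).
    move=> p hp; have [ex|xn] := eqVneq x xs.
      by have [h1 ->] := Axs ex; rewrite sqrtr0 mulr0.
    have [ap [ag hr]] := rX x Xx xn.
    have hrp : grad_x L x yh (x - xs) / Num.sqrt (L x ys - Ls) <= p.
      by rewrite -lee_fin; apply: le_trans hr hp.
    apply: le_trans gA _.
    rewrite -ler_pdivrMr ?sqrtr_gt0 //.
  have cB : forall p, (P_Y L X Y xs ys <= p%:E)%E ->
      Ls - L xh y <= p * Num.sqrt (Ls - L xs y).
    move=> p hp; have [ey|yn] := eqVneq y ys.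
      by have [h1 ->] := Bys ey; rewrite sqrtr0 mulr0.
    have [bp [bg hr]] := rY y Yy yn.
    have hrp : grad_y L xh y (ys - y) / Num.sqrt (Ls - L xs y) <= p.
      by rewrite -lee_fin; apply: le_trans hr hp.
    apply: le_trans gB _.
    rewrite -ler_pdivrMr ?sqrtr_gt0 //.
  have -> : L x yh - L xh y = (L x yh - Ls) + (Ls - L xh y) by rewrite addrA subrK.
  have -> : L x ys - L xs y = (L x ys - Ls) + (Ls - L xs y) by rewrite addrA subrK.
  have [[ex ey]|nz] : (x = xs /\ y = ys) \/ (x != xs \/ y != ys).
    by case: (eqVneq x xs); case: (eqVneq y ys); auto.
    have [h1 ->] := Axs ex; have [h2 ->] := Bys ey.
    rewrite addr0 mulr0 sqrtr0 mule0 lee_fin; lra.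
  case hPL : (P_L L X Y xs ys) => [p| |].
  - rewrite -EFinM lee_fin.
    have hPX : (P_X L X Y xs ys <= p%:E)%E by rewrite -hPL.
    have hPY : (P_Y L X Y xs ys <= p%:E)%E by rewrite -hPL.
    have hA := cA p hPX; have hB := cB p hPY.
    have p0 : 0 < p.
      case: nz => [xn|yn].
        have [ap [ag hr]] := rX x Xx xn.
        have : (grad_x L x (yhat L Y x) (x - xs) / Num.sqrt (L x ys - L xs ys))
          <= p by rewrite -lee_fin; apply: le_trans hr hPX.
        apply: lt_le_trans; rewrite divr_gt0 ?sqrtr_gt0 //.
        exact: lt_le_trans ap ag.
      have [bp [bg hr]] := rY y Yy yn.
      have : (grad_y L (xhat L X y) y (ys - y) / Num.sqrt (L xs ys - L xs y))
        <= p by rewrite -lee_fin; apply: le_trans hr hPY.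
      apply: lt_le_trans; rewrite divr_gt0 ?sqrtr_gt0 //.
      exact: lt_le_trans bp bg.
    apply: le_trans (lerD hA hB) _.
    rewrite -mulrDr (ler_wpM2l (ltW p0)).
      by []. exact: sqrt_sum.
  - have ab : 0 < (L x ys - Ls) + (Ls - L xs y).
      case: nz => [xn|yn].
        have [ap _] := rX x Xx xn; move: ap a0 b0; rewrite /Ls /=; lra.
      have [bp _] := rY y Yy yn; move: bp a0 b0; rewrite /Ls /=; lra.
    rewrite gt0_mulye ?leey // lte_fin sqrtr_gt0 mulr_gt0 //.
  - exfalso; case: nz => [xn|yn].
      have [_ [_ hr]] := rX x Xx xn.
      by have := le_trans hr PXle; rewrite hPL leeNy_eq.
    have [_ [_ hr]] := rY y Yy yn.
    by have := le_trans hr PYle; rewrite hPL leeNy_eq.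
set T := ereal_sup _.
have s20 : (0 <= (Num.sqrt (2:R))%:E)%E by rewrite lee_fin sqrtr_ge0.
rewrite /P_L ge_max; apply/andP; split.
  apply/ereal_supP => _ [x [Xx xn] <-].
  have [Yyh _] := yhP x Xx.
  set gx := grad_x L x (yhat L Y x).
  set gy := grad_y L x (yhat L Y x).
  have hT : ((Num.max (dual_norm NX gx / Num.sqrt muX)
                      (dual_norm NY gy / Num.sqrt muY))%:E <= T)%E.
    by apply: ereal_sup_ubound; exists (x, yhat L Y x).
  apply: le_trans (lee_wpmul2l s20 hT).
  rewrite -EFinM lee_fin.
  apply: le_trans (_ : _ <= Num.sqrt 2 * (dual_norm NX gx / Num.sqrt muX)) _.
    have [d0 dle] := dual_le hNX (grad_x_lin L x (yhat L Y x)).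
    apply: (ratio_bound (Nv := NX (x - xs))) => //.
    - by apply: NXpos; rewrite subr_eq0; apply/eqP.
    - exact: lowX.
  by rewrite ler_wpM2l ?sqrtr_ge0 // le_max lexx.
apply/ereal_supP => _ [y [Yy yn] <-].
have [Xxh _] := xhP y Yy.
set gx := grad_x L (xhat L X y) y.
set gy := grad_y L (xhat L X y) y.
have hT : ((Num.max (dual_norm NX gx / Num.sqrt muX)
                    (dual_norm NY gy / Num.sqrt muY))%:E <= T)%E.
  by apply: ereal_sup_ubound; exists (xhat L X y, y).
apply: le_trans (lee_wpmul2l s20 hT).
rewrite -EFinM lee_fin.
apply: le_trans (_ : _ <= Num.sqrt 2 * (dual_norm NY gy / Num.sqrt muY)) _.
  have [d0 dle] := dual_le hNY (grad_y_lin L (xhat L X y) y).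
  apply: (ratio_bound (Nv := NY (ys - y))) => //.
  - by apply: NYpos; rewrite subr_eq0 eq_sym; apply/eqP.
  - by rewrite -NYN opprB; exact: lowY.
by rewrite ler_wpM2l ?sqrtr_ge0 // le_max lexx orbT.
Qed.
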